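(* Let $K\ge 2$, $\mathbf{V}\in\mathbb{C}^{n\times r}$, $i\in[n]$, and $\boldsymbol{\phi}^*\in\mathcal{H}_r$. If two distinct hypersurfaces from coordinate group $i$, i.e. $\mathcal{H}_{i,m_1}$ and $\mathcal{H}_{i,m_2}$ with $m_1\ne m_2$ in $\{0,\dots,B_K-1\}$, both contain $\boldsymbol{\phi}^*$, then $\mathbf{V}_{i,:}\mathbf{c}(\boldsymbol{\phi}^* )=0$, and consequently all $B_K$ hypersurfaces $\mathcal{H}_{i,0},\dots,\mathcal{H}_{i,B_K-1}$ contain $\boldsymbol{\phi}^*$.
   Context: $B_K=K/2$ if $K$ is even and $B_K=K$ if $K$ is odd; $\vartheta_m=\pi(2m+1)/K$. $\mathcal{H}_r=(-\pi/2,\pi/2]^{2r-2}\times(-\pi/K,\pi/K]$. For $\boldsymbol{\phi}\in\mathcal{H}_r$, $\tilde{\mathbf{c}}(\boldsymbol{\phi})\in\mathbb{R}^{2r}$ is given by $\tilde c_1=\sin\phi_1$, $\tilde c_k=(\prod_{l<k}\cos\phi_l)\sin\phi_k$ for $2\le k\le 2r-1$, $\tilde c_{2r}=(\prod_{l=1}^{2r-2}\cos\phi_l)\cos\phi_{2r-1}$, and $\mathbf{c}(\boldsymbol{\phi})\in\mathbb{C}^r$ by $c_j=\tilde c_{2j}+\mathrm{i}\tilde c_{2j-1}$. The hypersurface for coordinate $i$ and boundary index $m$ is $\mathcal{H}_{i,m}=\{\boldsymbol{\phi}\in\mathcal{H}_r:\mathrm{Im}(e^{-\mathrm{i}\vartheta_m}\mathbf{V}_{i,:}\mathbf{c}(\boldsymbol{\phi}))=0\}$.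 *)

(* Defs.v *)
From HB Require Import structures.
From mathcomp Require Import all_boot all_order all_algebra.
From mathcomp Require Import complex.
From mathcomp Require Import reals trigo.
Set Implicit Arguments. Unset Strict Implicit. Unset Printing Implicit Defensive.
Import Order.TTheory GRing.Theory Num.Theory.
Local Open Scope ring_scope.

Section Defs.
Variable R : realType.

Definition BK (K : nat) : nat := if odd K then K else K./2.

Definition theta (K m : nat) : R := pi * (m.*2.+1)%:R / K%:R.

(* 1-indexed access phi_k (k = 1 .. 2r-1) to phi : 'rV_(2r-1);
   (out-of-range indices are never used) *)
Definition phiAt (r : nat) (phi : 'rV[R]_(r.*2.-1)) (k : nat) : R :=
  match @insub _ (fun j => j < r.*2.-1)%N _ k.-1 with
  | Some j => phi 0 j
  | None => 0
  end.

Definition in_Hr (K r : nat) (phi : 'rV[R]_(r.*2.-1)) : Prop :=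
  (forall k : 'I_(r.*2.-1), (k < r.*2.-2)%N ->
     - (pi / 2) < phi 0 k /\ phi 0 k <= pi / 2) /\
  (forall k : 'I_(r.*2.-1), (k = r.*2.-2 :> nat) ->
     - (pi / K%:R) < phi 0 k /\ phi 0 k <= pi / K%:R).

(* tilde c_k, 1-indexed, k = 1 .. 2r *)
Definition ctilde (r : nat) (phi : 'rV[R]_(r.*2.-1)) (k : nat) : R :=
  if k == r.*2 then
    (\prod_(1 <= l < r.*2.-1) cos (phiAt phi l)) * cos (phiAt phi r.*2.-1)
  else
    (\prod_(1 <= l < k) cos (phiAt phi l)) * sin (phiAt phi k).

(* c_j = tilde c_{2j} + i tilde c_{2j-1}, j = 1..r (stored 0-indexed) *)
Definition cvec (r : nat) (phi : 'rV[R]_(r.*2.-1)) : 'cV[R[i]]_r :=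
  \col_(j < r) ((ctilde phi (j.+1).*2) +i* (ctilde phi (j.+1).*2.-1))%C.

Definition Vrow_c (n r : nat) (V : 'M[R[i]]_(n, r)) (i : 'I_n)
  (phi : 'rV[R]_(r.*2.-1)) : R[i] :=
  \sum_(j < r) V i j * cvec phi j 0.

Definition expmi (t : R) : R[i] := (cos t +i* (- sin t))%C.

Definition in_Him (K n r : nat) (V : 'M[R[i]]_(n, r)) (i : 'I_n) (m : nat)
  (phi : 'rV[R]_(r.*2.-1)) : Prop :=
  in_Hr K phi /\ complex.Im (expmi (theta K m) * Vrow_c V i phi) = 0.

End Defs.

(* Main.v *)
Require Import Defs.
From HB Require Import structures.
From mathcomp Require Import all_boot all_order all_algebra.
From mathcomp Require Import complex.
From mathcomp Require Import reals trigo.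
From mathcomp Require Import ring lra zify.
Import Order.TTheory GRing.Theory Num.Theory.
Local Open Scope ring_scope.

Lemma Im_expmi (R : realType) t (a b : R) :
  complex.Im (expmi t * (a +i* b)%C) = cos t * b - sin t * a.
Proof. rewrite /expmi /=. ring. Qed.

Lemma key (R : realType) (a b t1 t2 : R) :
  cos t1 * b - sin t1 * a = 0 -> cos t2 * b - sin t2 * a = 0 ->
  sin (t1 - t2) != 0 -> a = 0 /\ b = 0.
Proof.
move=> h1 h2 hs; rewrite sinB in hs.
have ea : a * (sin t1 * cos t2 - cos t1 * sin t2) = 0.
  have -> : a * (sin t1 * cos t2 - cos t1 * sin t2) =
    cos t1 * (cos t2 * b - sin t2 * a) - cos t2 * (cos t1 * b - sin t1 * a) by ring.
  by rewrite h1 h2 !mulr0 subr0.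
have eb : b * (sin t1 * cos t2 - cos t1 * sin t2) = 0.
  have -> : b * (sin t1 * cos t2 - cos t1 * sin t2) =
    sin t1 * (cos t2 * b - sin t2 * a) - sin t2 * (cos t1 * b - sin t1 * a) by ring.
  by rewrite h1 h2 !mulr0 subr0.
move: ea eb => /eqP; rewrite mulf_eq0 (negbTE hs) orbF => /eqP ->.
by move/eqP; rewrite mulf_eq0 (negbTE hs) orbF => /eqP ->.
Qed.

Lemma sin_q (R : realType) (q : R) : 0 < q < 2 -> q != 1 -> sin (pi * q) != 0.
Proof.
move=> /andP[q0 q2] q1.
have pi0 : 0 < pi :> R by exact: pi_gt0.
case: (ltrgtP q 1) q1 => // hq _.
  apply: lt0r_neq0; apply: sin_gt0_pi; apply/andP; split; first exact: mulr_gt0.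
  by rewrite -[X in _ < X]mulr1 ltr_pM2l.
have -> : pi * q = pi * (q - 1) + pi by ring.
rewrite sinDpi oppr_eq0.
apply: lt0r_neq0; apply: sin_gt0_pi; apply/andP; split; first by apply: mulr_gt0 => //; lra.
by rewrite -[X in _ < X]mulr1 ltr_pM2l //; lra.
Qed.

Lemma natfacts (K m1 m2 : nat) : (2 <= K)%N -> (m2 < m1)%N -> (m1 < BK K)%N ->
  (0 < m1.*2.+1 - m2.*2.+1 < K.*2)%N /\ (m1.*2.+1 - m2.*2.+1 != K)%N.
Proof.
rewrite /BK; case: ifP => hodd hK hm hb.
  split; first lia.
  lia.
lia.
Qed.

Lemma qfacts (R : realType) (N K : nat) : (0 < N < K.*2)%N -> (N != K)%N -> (2 <= K)%N ->
  let q := (N%:R / K%:R : R) in 0 < q < 2 /\ q != 1.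
Proof.
move=> /andP[N0 NK] NnK K2 q.
have K0 : 0 < K%:R :> R by rewrite ltr0n; lia.
split; first (apply/andP; split).
- by rewrite /q divr_gt0 // ltr0n.
- rewrite /q ltr_pdivrMr // -natrM ltr_nat; lia.
- rewrite /q; apply/eqP => e.
  have : (N%:R : R) = K%:R by rewrite -[LHS](mulfVK (lt0r_neq0 K0)) e mul1r.
  by move/eqP; rewrite eqr_nat (negbTE NnK).
Qed.

Lemma zero_aux (R : realType) (K n r : nat) (V : 'M[R[i]]_(n, r))
  (i : 'I_n) (phi : 'rV[R]_(r.*2.-1)) (m1 m2 : nat) :
  (2 <= K)%N -> (m2 < m1)%N -> (m1 < BK K)%N ->
  in_Him K V i m1 phi -> in_Him K V i m2 phi -> Vrow_c V i phi = 0.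
Proof.
move=> K2 hm hb [_ h1] [_ h2].
move: h1 h2; case: (Vrow_c V i phi) => a b; rewrite !Im_expmi => h1 h2.
have [nf1 nf2] := @natfacts _ _ _ K2 hm hb.
have [q1 q2] := @qfacts R _ _ nf1 nf2 K2.
have hs := @sin_q R _ q1 q2.
have e : theta R K m1 - theta R K m2 =
   pi * ((m1.*2.+1 - m2.*2.+1)%N%:R / K%:R) :> R.
  rewrite /theta natrB; last by rewrite ltnS leq_double ltnW.
  by rewrite -!mulrA -mulrBr mulrBl.
rewrite -e in hs.
by have [-> ->] := @key R _ _ _ _ h1 h2 hs.
Qed.

Theorem corollary3 (R : realType) (K n r : nat) (V : 'M[R[i]]_(n, r))
  (i : 'I_n) (phi : 'rV[R]_(r.*2.-1)) (m1 m2 : nat) :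
  (2 <= K)%N -> (1 <= r)%N ->
  in_Hr K phi ->
  (m1 < BK K)%N -> (m2 < BK K)%N -> m1 <> m2 ->
  in_Him K V i m1 phi -> in_Him K V i m2 phi ->
  Vrow_c V i phi = 0 /\
  (forall m : nat, (m < BK K)%N -> in_Him K V i m phi).
Proof.
move=> K2 _ hH b1 b2 ne h1 h2.
have z0 : Vrow_c V i phi = 0.
  case: (ltngtP m1 m2) => c.
  - exact: (@zero_aux _ _ _ _ _ _ _ _ _ K2 c b2 h2 h1).
  - exact: (@zero_aux _ _ _ _ _ _ _ _ _ K2 c b1 h1 h2).
  - by exfalso; apply: ne.
split=> // m _; split=> //.
by rewrite z0 mulr0.
Qed.
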